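(* Let $\mathds{k}$ be an algebraically closed field of characteristic $p>0$, $G$ a finite group, $\omega$ a 3-cocycle on $G$ with values in $\mathds{k}^\times$, $H\subseteq G$ a subgroup and $\phi:H\times H\to\mathds{k}^\times$ a 2-cochain with $d\phi=\omega|_H^{-1}$. Then the finite semisimple right $\mathbf{Vect}^\omega_G$-module category $\mathcal{M}(H,\phi)$ is separable if and only if $H$ has no $p$-torsion.
   Context: $\mathbf{Vect}^{\omega}_G$ is the fusion category of finite-dimensional $G$-graded $\mathds{k}$-vector spaces with simple objects $\mathds{k}_g$, $\mathds{k}_g\otimes\mathds{k}_h=\mathds{k}_{gh}$, and associator $(\mathds{k}_g\otimes \mathds{k}_h)\otimes \mathds{k}_m\rightarrow \mathds{k}_g\otimes (\mathds{k}_h\otimes \mathds{k}_m)$ given by $\omega(g,h,m)$. For a 2-cochain $\kappa$, $(d\kappa)(a,b,c)=\kappa(b,c)\kappa(ab,c)^{-1}\kappa(a,bc)\kappa(a,b)^{-1}$. $R(H,\phi)$ is the algebra in $\mathbf{Vect}^\omega_G$ given by the twisted group algebra $\mathds{k}^\phi[H]$ (object $\bigoplus_{h\in H}\mathds{k}_h$, product $h_1\cdot h_2=\phi(h_1,h_2)h_1h_2$), and $\mathcal{M}(H,\phi)$ is the right $\mathbf{Vect}^\omega_G$-module category of left $R(H,\phi)$-modules in $\mathbf{Vect}^\omega_G$. A finite semisimple right module category $\mathcal{M}$ over a fusion category $\mathcal{C}$ is separable if $\mathcal{M}\simeq Mod_{\mathcal{C}}(R)$ for a separable algebra $R$ in $\mathcal{C}$,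 i.e. one whose multiplication $R\otimes R\to R$ admits a section as a map of $R$-$R$-bimodules (this does not depend on the choice of $R$). *)

(* Defs.v *)
From HB Require Import structures.
From mathcomp Require Import all_boot all_order all_algebra all_fingroup all_solvable.
Set Implicit Arguments. Unset Strict Implicit. Unset Printing Implicit Defensive.
Import GRing.Theory.
Local Open Scope ring_scope.

(* A function om : G -> G -> G -> F models the associator of Vect^om_G:
   (k_g (x) k_h) (x) k_m -> k_g (x) (k_h (x) k_m) is multiplication by om g h m. *)

Section Defs.
Variables (F : fieldType) (G : finGroupType).

Definition is_3cocycle (om : G -> G -> G -> F) : Prop :=
  (forall a b c, om a b c != 0) /\
  (forall g1 g2 g3 g4,
     om g2 g3 g4 * om g1 (g2 * g3)%g g4 * om g1 g2 g3
     = om (g1 * g2)%g g3 g4 * om g1 g2 (g3 * g4)%g).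

Definition cobound2 (k : G -> G -> F) (a b c : G) : F :=
  k b c * (k (a * b)%g c)^-1 * k a (b * c)%g * (k a b)^-1.

Definition is_twist (H : {group G}) (om : G -> G -> G -> F) (phi : G -> G -> F)
  : Prop :=
  (forall a b, a \in H -> b \in H -> phi a b != 0) /\
  (forall a b c, a \in H -> b \in H -> c \in H ->
     cobound2 phi a b c = (om a b c)^-1).

(* The algebra R(H,phi) = k^phi[H] in Vect^om_G has basis {h : h in H}, h of
   degree h, product h1.h2 = phi(h1,h2) h1h2.  R (x) R has basis
   e_{a,b} (a,b in H) of degree ab.  A linear map s : R -> R (x) R is encoded
   by its coefficients: s(x) = sum_{a,b in H} sec x a b e_{a,b}.

   - s is a morphism of Vect^om_G iff it preserves the G-grading.
   - multiplication m : R (x) R -> R, e_{a,b} |-> phi(a,b) ab.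
   - left R-action on R (x) R: (m (x) id) o assoc^-1, i.e.
       h . e_{a,b} = om(h,a,b)^-1 phi(h,a) e_{ha,b};
     right R-action: (id (x) m) o assoc, i.e.
       e_{a,b} . h = om(a,b,h) phi(b,h) e_{a,bh};
     the actions of R on R are given by m.
   R(H,phi) is separable iff m admits a section that is a map of R-R-bimodules. *)

Definition sec_graded (H : {group G}) (sec : G -> G -> G -> F) : Prop :=
  forall x a b, x \in H -> a \in H -> b \in H -> (a * b)%g != x -> sec x a b = 0.

Definition sec_is_section (H : {group G}) (phi : G -> G -> F)
  (sec : G -> G -> G -> F) : Prop :=
  forall x y, x \in H -> y \in H ->
    \sum_(a in H) \sum_(b in H | (a * b)%g == y) sec x a b * phi a b
    = (x == y)%:R.

Definition sec_left_linear (H : {group G}) (om : G -> G -> G -> F)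
  (phi : G -> G -> F) (sec : G -> G -> G -> F) : Prop :=
  forall h x a' b', h \in H -> x \in H -> a' \in H -> b' \in H ->
    phi h x * sec (h * x)%g a' b'
    = \sum_(a in H) \sum_(b in H | ((h * a)%g == a') && (b == b'))
        sec x a b * ((om h a b)^-1 * phi h a).

Definition sec_right_linear (H : {group G}) (om : G -> G -> G -> F)
  (phi : G -> G -> F) (sec : G -> G -> G -> F) : Prop :=
  forall x h a' b', x \in H -> h \in H -> a' \in H -> b' \in H ->
    phi x h * sec (x * h)%g a' b'
    = \sum_(a in H) \sum_(b in H | (a == a') && ((b * h)%g == b'))
        sec x a b * (om a b h * phi b h).

Definition twisted_group_alg_separable (H : {group G})
  (om : G -> G -> G -> F) (phi : G -> G -> F) : Prop :=
  exists sec : G -> G -> G -> F,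
    [/\ sec_graded H sec, sec_is_section H phi sec,
        sec_left_linear H om phi sec & sec_right_linear H om phi sec].

(* M(H,phi) = Mod(R(H,phi)) is separable; since separability of a module
   category does not depend on the choice of algebra R with M ~ Mod(R),
   this is separability of R(H,phi). *)
Definition module_cat_separable (H : {group G})
  (om : G -> G -> G -> F) (phi : G -> G -> F) : Prop :=
  twisted_group_alg_separable H om phi.

Definition no_p_torsion (p : nat) (H : {group G}) : Prop :=
  forall x, x \in H -> (p.-elt x)%g -> x = 1%g.

End Defs.

(* Main.v *)
Require Import Defs.
From HB Require Import structures.
From mathcomp Require Import all_boot all_order all_algebra all_fingroup all_solvable.
From mathcomp Require Import ring.
Set Implicit Arguments. Unset Strict Implicit. Unset Printing Implicit Defensive.
Import GRing.Theory.

Section Helpers.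
Variables (F : fieldType) (G : finGroupType).
Local Open Scope ring_scope.

Lemma sum_pick1 (A : {set G}) (P : pred G) b0 (f : G -> F) :
  b0 \in A -> (forall b, P b = (b == b0)) -> \sum_(b in A | P b) f b = f b0.
Proof.
move=> Hb HP; rewrite (bigD1 b0) /=; last by rewrite Hb HP eqxx.
rewrite big1 ?addr0 // => b /andP[/andP[_]]; rewrite HP => /eqP -> ; by rewrite eqxx.
Qed.

Lemma sum_pick2 (A : {set G}) (P Q : pred G) a0 b0 (f : G -> G -> F) :
  a0 \in A -> b0 \in A -> (forall a, P a = (a == a0)) -> (forall b, Q b = (b == b0)) ->
  \sum_(a in A) \sum_(b in A | P a && Q b) f a b = f a0 b0.
Proof.
move=> Ha Hb HP HQ; rewrite (bigD1 a0) //= [X in _ + X]big1 ?addr0.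
  by apply: (@sum_pick1 A (fun b => P a0 && Q b) b0 (f a0)) => // b; rewrite HP eqxx HQ.
move=> a /andP[_ na]; rewrite big1 // => b /andP[_]; by rewrite HP (negbTE na).
Qed.
End Helpers.

Local Open Scope ring_scope.

Theorem lemma1p1p8 (F : closedFieldType) (p : nat) (G : finGroupType)
  (H : {group G}) (om : G -> G -> G -> F) (phi : G -> G -> F) :
  (p \in [pchar F])%R ->
  is_3cocycle om ->
  is_twist H om phi ->
  module_cat_separable H om phi <-> no_p_torsion p H.
Proof.
move=> pF [om0 _] [phi0 tw].
have pr := pcharf_prime pF.
have EL : forall h a b, h \in H -> a \in H -> b \in H ->
   phi h (a * b)%g = ((om h a b)^-1 * phi h a * phi (h * a)%g b / phi a b)%R.
  move=> h a b hH aH bH; have := tw h a b hH aH bH; rewrite /cobound2 => <-.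
  have := phi0 _ _ hH aH; have := phi0 _ _ aH bH; have := phi0 _ _ (groupM hH aH) bH.
  move=> n1 n2 n3; field; by rewrite n1 n2 n3.
have ER : forall a b h, a \in H -> b \in H -> h \in H ->
   phi (a * b)%g h = (om a b h * phi b h * phi a (b * h)%g / phi a b)%R.
  move=> a b h aH bH hH; have := tw a b h aH bH hH => E.
  have -> : om a b h = (cobound2 phi a b h)^-1%R by rewrite E invrK.
  rewrite /cobound2.
  have := phi0 _ _ aH bH; have := phi0 _ _ (groupM aH bH) hH; have := phi0 _ _ aH (groupM bH hH).
  have := phi0 _ _ bH hH.
  move=> n1 n2 n3 n4; field; by rewrite n1 n2 n3 n4.
split.
- case=> sec [sg ss sl sr].
  pose c a b := (sec (a * b)%g a b * phi a b)%R.
  have cL : forall h a b, h \in H -> a \in H -> b \in H -> c (h * a)%g b = c a b.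
    move=> h a b hH aH bH.
    have := sl h (a * b)%g (h * a)%g b hH (groupM aH bH) (groupM hH aH) bH.
    rewrite (@sum_pick2 _ _ _ _ _ a b) //; last first.
      by move=> a1; apply/eqP/eqP => [/mulgI|->].
    rewrite EL // /c -mulgA => E.
    have n1 := phi0 _ _ aH bH; have n2 := phi0 _ _ hH aH.
    have n3 : (om h a b)^-1 != 0 by rewrite invr_eq0 om0.
    apply: (mulIf (mulf_neq0 (mulf_neq0 n3 n2) (invr_neq0 n1))).
    transitivity (((om h a b)^-1 * phi h a * phi (h * a)%g b / phi a b) * sec (h * (a * b))%g (h * a)%g b)%R; first by ring.
    rewrite E; field; by rewrite n1 om0.
  have cR : forall a b h, a \in H -> b \in H -> h \in H -> c a (b * h)%g = c a b.
    move=> a b h aH bH hH.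
    have := sr (a * b)%g h a (b * h)%g (groupM aH bH) hH aH (groupM bH hH).
    rewrite (@sum_pick2 _ _ _ _ _ a b) //; last first.
      by move=> b1; apply/eqP/eqP => [/mulIg|->].
    rewrite ER // /c mulgA => E.
    have n1 := phi0 _ _ aH bH; have n2 := phi0 _ _ bH hH.
    have n3 := om0 a b h.
    apply: (mulIf (mulf_neq0 (mulf_neq0 n3 n2) (invr_neq0 n1))).
    transitivity ((om a b h * phi b h * phi a (b * h)%g / phi a b) * sec (a * b * h)%g a (b * h)%g)%R; first by ring.
    rewrite E; field; by rewrite n1.
  have cc : forall a b, a \in H -> b \in H -> c a b = c 1%g 1%g.
    move=> a b aH bH; rewrite -[a]mulg1 cL // -[b]mul1g cR //.
  have := ss 1%g 1%g (group1 H) (group1 H); rewrite eqxx.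
  under eq_bigr => a aH.
    rewrite (@sum_pick1 _ _ _ _ a^-1%g (fun b => sec 1%g a b * phi a b)%R); first over.
      by rewrite groupV.
    by move=> b; apply/eqP/eqP => [E1|->]; [apply: (mulgI a); rewrite E1 mulgV | rewrite mulgV].
  under eq_bigr => a aH.
    have -> : (sec 1%g a (a^-1)%g * phi a (a^-1)%g = c a (a^-1)%g)%R by rewrite /c mulgV.
    rewrite cc ?groupV //; over.
  rewrite sumr_const => E x xH px; case: (eqVneq x 1%g) => // nx1; exfalso.
  have o1 : (1 < #[x]%g)%N by rewrite order_gt1.
  have [k ok] := p_natP px.
  have : (p %| #|H|)%N.
    apply: dvdn_trans (order_dvdG xH); rewrite ok; case: k ok o1 => [->|k _ _] //.
    by rewrite expnS dvdn_mulr.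
  rewrite (dvdn_pcharf pF) => /eqP Hz.
  move: E; rewrite -(mulr_natr (c 1%g 1%g)) (_ : (#|_|%:R : F) = 0); last exact: Hz.
  by rewrite mulr0 => /eqP; rewrite eq_sym oner_eq0.
- move=> npt.
  have nd : ~~ (p %| #|H|)%N.
    apply/negP => /(Cauchy pr) [x xH ox].
    have : x = 1%g by apply: npt => //; rewrite /p_elt ox pnat_id.
    by move=> x1; move: ox (prime_gt1 pr); rewrite x1 order1 => <-.
  have k0 : (#|H|%:R : F) != 0 by rewrite -(dvdn_pcharf pF).
  exists (fun x a b => if (a * b == x)%g then ((#|H|%:R)^-1 / phi a b)%R else 0%R).
  split.
  + by move=> x a b _ _ _ /negbTE ->.
  + move=> x y xH yH.
    rewrite (eq_bigr (fun _ => if y == x then (#|H|%:R)^-1 else 0)); last first.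
      move=> a aH.
      rewrite (@sum_pick1 _ _ _ _ (a^-1 * y)%g (fun b => (if (a * b == x)%g then ((#|H|%:R)^-1 / phi a b)%R else 0%R) * phi a b)%R); last first.
        by move=> b; apply/eqP/eqP => [<-|->]; rewrite ?mulKg ?mulKVg.
        by rewrite groupM ?groupV.
      rewrite mulKVg; case: eqP => _; last by rewrite mul0r.
      by rewrite divfK ?phi0 ?groupM ?groupV.
    rewrite sumr_const eq_sym; case: eqP => _; last by rewrite mul0rn.
    by rewrite -(mulr_natr (#|H|%:R)^-1) mulVf.
  + move=> h x a' b' hH xH aH bH.
    rewrite (@sum_pick2 _ _ _ _ _ (h^-1 * a')%g b') ?groupM ?groupV //; last first.
      by move=> a1; apply/eqP/eqP => [<-|->]; rewrite ?mulKg ?mulKVg.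
    have -> : a' = (h * (h^-1 * a'))%g by rewrite mulKVg.
    have aH' : (h^-1 * a')%g \in H by rewrite groupM ?groupV.
    move: (h^-1 * a')%g aH' => a aH'; rewrite mulKg.
    have -> : (h * a * b' == h * x)%g = (a * b' == x)%g.
      by rewrite -mulgA; apply/eqP/eqP => [/mulgI|->].
    case: eqP => [<-|_]; last by rewrite !mulr0 !mul0r.
    rewrite EL //.
    have n1 := phi0 _ _ aH' bH; have n2 := phi0 _ _ hH aH'; have n3 := om0 h a b'.
    have n4 := phi0 _ _ (groupM hH aH') bH.
    field; by rewrite ?n1 ?n2 ?n3 ?n4 ?k0.
  + move=> x h a' b' xH hH aH bH.
    rewrite (@sum_pick2 _ _ _ _ _ a' (b' * h^-1)%g) ?groupM ?groupV //; last first.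
      by move=> b1; apply/eqP/eqP => [<-|->]; rewrite ?mulgK ?mulgKV.
    have -> : b' = ((b' * h^-1) * h)%g by rewrite mulgKV.
    have bH' : (b' * h^-1)%g \in H by rewrite groupM ?groupV.
    move: (b' * h^-1)%g bH' => b bH'; rewrite mulgK.
    have -> : (a' * (b * h) == x * h)%g = (a' * b == x)%g.
      by rewrite mulgA; apply/eqP/eqP => [/mulIg|->].
    case: eqP => [<-|_]; last by rewrite !mulr0 !mul0r.
    rewrite ER //.
    have n1 := phi0 _ _ aH bH'; have n2 := phi0 _ _ bH' hH; have n3 := om0 a' b h.
    have n4 := phi0 _ _ aH (groupM bH' hH).
    field; by apply/and3P.
Qed.
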